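(* For all $m,t\in\mathbb{N}$ with $m\geq 3$ and all integers $r$ with $2\leq r\leq \frac{m}{2+\sqrt{2}}$, \[ R_t(r,m)\leq \left(1-\frac{1}{2^t}\right)2^m-\frac{\sqrt{2^t-1}}{2^t}\left(1+\sqrt{2}\right)^{r-1}2^{\frac{m-1}{2}}+\frac{\sqrt{2^t-1}}{2^{t}\sqrt[4]{2} }\,r\binom{m}{r}. \]
   Context: For a $t\times n$ matrix $\mathbf{v}$ over $\mathbb{F}_2$ with rows $\overline{v}_1,\dots,\overline{v}_t$, $\mathrm{wt}^{(t)}(\mathbf{v})=\left|\bigcup_{i} \mathrm{supp}(\overline{v}_i)\right|$ and $d^{(t)}(\mathbf{u},\mathbf{v})=\mathrm{wt}^{(t)}(\mathbf{u}-\mathbf{v})$. For a linear code $C\subseteq\mathbb{F}_2^n$, $C^t$ is the set of $t\times n$ matrices all of whose rows lie in $C$, and $R_t(C)$ is the smallest integer $\rho$ such that for every $\mathbf{v}\in\mathbb{F}_2^{t\times n}$ some $\mathbf{c}\in C^t$ has $d^{(t)}(\mathbf{v},\mathbf{c})\le\rho$. Reed–Muller codes $\mathrm{RM}(r,m)\subseteq\mathbb{F}_2^{2^m}$: $\mathrm{RM}(0,m)=\{\overline{0},\overline{1}\}$, $\mathrm{RM}(m,m)=\mathbb{F}_2^{2^m}$, and for $1\leq r\leq m-1$, $\mathrm{RM}(r,m)=\{(\overline{u},\overline{u}+\overline{v}) : \overline{u}\in \mathrm{RM}(r,m-1),\ \overline{v}\in\mathrm{RM}(r-1,m-1)\}$.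 $R_t(r,m)=R_t(\mathrm{RM}(r,m))$. *)

(* Defs.v *)
From mathcomp Require Import all_boot.
Set Implicit Arguments. Unset Strict Implicit. Unset Printing Implicit Defensive.

(* Vectors of F_2^n are boolean finite functions (xor = addition in F_2). *)
Definition vec (n : nat) := {ffun 'I_n -> bool}.

(* total coordinate lookup: u_j if j < n, false otherwise *)
Definition get n (u : vec n) (j : nat) : bool :=
  if insub j is Some i then u i else false.

(* (u | v) : concatenation, placed in a vector of length k (used with k = 2n) *)
Definition concat n k (u v : vec n) : vec k :=
  [ffun i : 'I_k => if i < n then get u i else get v (i - n)].

Definition vadd n (u v : vec n) : vec n := [ffun i => xorb (u i) (v i)].

(* Reed--Muller code RM(r,m) <= F_2^(2^m), via the (u | u+v) construction.
   RM(0,m) = {0,1}; RM(r,m) = whole space for r >= m. *)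
Fixpoint RM (r m : nat) : {set vec (2 ^ m)} :=
  match m with
  | 0 => if r == 0 then [set [ffun=> false]; [ffun=> true]] else setT
  | m'.+1 =>
      if r == 0 then [set [ffun=> false]; [ffun=> true]]
      else if m'.+1 <= r then setT
      else [set concat (2 ^ m'.+1) u (vadd u w) | u in RM r m', w in RM r.-1 m']
  end.

Definition mat (t n : nat) := {ffun 'I_t -> vec n}.

Definition wtt t n (v : mat t n) : nat := #|[set j : 'I_n | [exists i, v i j]]|.

Definition dt t n (u v : mat t n) : nat :=
  wtt [ffun i => vadd (u i) (v i)].

Definition powC t n (C : {set vec n}) : {set mat t n} :=
  [set c : mat t n | [forall i, c i \in C]].

(* R_t(C): max over v of the distance to the nearest element of C^t, i.e. the
   smallest rho such that every v is within rho of some c in C^t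
   (C nonempty; default value n is only used for empty C). *)
Definition Rt (t n : nat) (C : {set vec n}) : nat :=
  \max_(v : mat t n) \big[minn/n]_(c in powC t C) dt v c.

Definition Rtrm (t r m : nat) : nat := Rt t (RM r m).

(* Main.v *)
Require Import Defs.
From mathcomp Require Import all_boot all_algebra zify.
Set Implicit Arguments. Unset Strict Implicit. Unset Printing Implicit Defensive.
Import GRing.Theory Num.Theory.

Lemma get_ord n (u : vec n) (i : 'I_n) : get u i = u i.
Proof. by rewrite /get (insubT (fun x => x < n) (ltn_ord i)) /=; congr (u _); apply: val_inj. Qed.

Lemma get_oob n (u : vec n) y : n <= y -> get u y = false.
Proof. by move=> H; rewrite /get insubN // -leqNgt. Qed.

Lemma get_ffun k (F : nat -> bool) y :
  get [ffun i : 'I_k => F (nat_of_ord i)] y = (y < k) && F y.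
Proof.
rewrite /get; case: insubP => [i Hi <-|/negbTE ->] //.
by rewrite ffunE (ltn_ord i).
Qed.

Lemma get_vadd n (u v : vec n) y : get (vadd u v) y = xorb (get u y) (get v y).
Proof.
case: (ltnP y n) => H; last by rewrite !get_oob.
by rewrite -[y]/(nat_of_ord (Ordinal H)) !get_ord ffunE.
Qed.

Lemma get_const n b y : get ([ffun=> b] : vec n) y = (y < n) && b.
Proof. rewrite /get; case: insubP => [i Hi <-|/negbTE ->] //. by rewrite ffunE (ltn_ord i). Qed.

Lemma get_concat n k (u v : vec n) y :
  get (concat k u v) y = (y < k) && (if y < n then get u y else get v (y - n)).
Proof. exact: (get_ffun k (fun x => if x < n then get u x else get v (x - n)) y). Qed.

Definition c01 n : seq (vec n) := [:: [ffun=> false]; [ffun=> true]].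

Fixpoint fam (k : nat) : seq (vec (2 ^ k)) :=
  match k with
  | 0 => c01 _
  | k'.+1 => [seq concat (2 ^ k'.+1) u (vadd u w) | u <- fam k', w <- c01 _]
  end.

Lemma fam_S k : fam k.+1 = [seq concat (2 ^ k.+1) u (vadd u w) | u <- fam k, w <- c01 _].
Proof. by []. Qed.

Local Open Scope ring_scope.
Definition sg (b : bool) : int := if b then -1 else 1.

Lemma sgX a b : sg (xorb a b) = sg a * sg b.
Proof. by case: a; case: b. Qed.

Lemma sg2 a : sg a * sg a = 1.
Proof. by case: a. Qed.

Lemma fam_pair k x y : (x < 2 ^ k)%N -> (y < 2 ^ k)%N ->
  \sum_(a <- fam k) sg (get a x) * sg (get a y) =
    if x == y then (size (fam k))%:Z else 0.
Proof.
elim: k x y => [|k IH] x y Hx Hy.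
  have /eqP-> : x == 0%N by rewrite -leqn0 -ltnS -(expn0 2).
  have /eqP-> : y == 0%N by rewrite -leqn0 -ltnS -(expn0 2).
  by rewrite !big_cons big_nil !get_const /= mulr1 mulrNN mulr1 addr0.
rewrite fam_S big_allpairs_dep size_allpairs /=.
have Ek : (2 ^ k.+1 = 2 ^ k + 2 ^ k)%N by rewrite expnS mul2n addnn.
under eq_bigr => u _.
  rewrite !big_cons big_nil !get_concat Hx Hy /= !get_vadd !get_const.
  over.
move: Hx Hy; rewrite Ek => Hx Hy.
case: (ltnP x (2 ^ k)) => Hx'; case: (ltnP y (2 ^ k)) => Hy' /=.
- under eq_bigr => u _ do rewrite addr0 -mulr2n.
  rewrite sumrMnl IH //. case: eqP => _; last by rewrite mul0rn.
  by rewrite muln2 -addnn PoszD mulr2n.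
- have -> : (y - 2 ^ k < 2 ^ k)%N by rewrite ltn_subLR.
  rewrite ?andbF ?andbT ?addbF ?addbT big1 ?(ltn_eqF (leq_trans Hx' Hy')) //.
  by move=> u _; rewrite ?sgX /= mulr1 mulrN1 mulrN addr0 addrN.
- have -> : (x - 2 ^ k < 2 ^ k)%N by rewrite ltn_subLR.
  rewrite ?andbF ?andbT ?addbF ?addbT big1 ?(gtn_eqF (leq_trans Hy' Hx')) //.
  by move=> u _; rewrite ?sgX /= mulr1 mulrN1 mulNr addr0 addrN.
- have -> : (x - 2 ^ k < 2 ^ k)%N by rewrite ltn_subLR.
  have -> : (y - 2 ^ k < 2 ^ k)%N by rewrite ltn_subLR.
  rewrite ?andbF ?andbT ?addbF ?addbT.
  under eq_bigr => u _ do rewrite !sgX /= !mulr1 !mulrN1 mulrNN addr0 -mulr2n.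
  rewrite sumrMnl IH ?ltn_subLR //.
  have -> : ((x - 2 ^ k)%N == (y - 2 ^ k)%N) = (x == y).
    by apply/eqP/eqP => [H|-> //]; rewrite -(subnK Hx') -(subnK Hy') H.
  case: eqP => _; last by rewrite mul0rn.
  by rewrite muln2 -addnn PoszD mulr2n.
Qed.
Local Close Scope ring_scope.

Lemma fam_compl k a : a \in fam k ->
  exists2 a', a' \in fam k & forall x, (x < 2 ^ k)%N -> get a' x = ~~ get a x.
Proof.
elim: k a => [|k IH] a.
  rewrite /= !inE => /orP[]/eqP->.
  - apply: (ex_intro2 _ _ ([ffun=> true] : vec (2^0))); first by rewrite /= !inE eqxx orbT.
    by move=> x Hx; rewrite !get_const Hx.
  - apply: (ex_intro2 _ _ ([ffun=> false] : vec (2^0))); first by rewrite /= !inE eqxx.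
    by move=> x Hx; rewrite !get_const Hx.
rewrite fam_S => /allpairsP[[u w] [/= Hu Hw ->]].
have [u' Hu' Cu] := IH u Hu.
have Hm : concat (2 ^ k.+1) u' (vadd u' w) \in fam k.+1.
  by rewrite fam_S; apply: allpairs_f.
exists (concat (2 ^ k.+1) u' (vadd u' w)) => //.
move=> x Hx; rewrite !get_concat Hx /=.
case: ltnP => H; first exact: Cu.
rewrite !get_vadd Cu; first by case: (get u _); case: (get w _).
by rewrite ltn_subLR // addnn -mul2n -expnS.
Qed.

Lemma RM0 k : RM 0 k = [set [ffun=> false]; [ffun=> true]].
Proof. by case: k. Qed.

Lemma fam_RM k a : a \in fam k -> a \in RM 1 k.
Proof.
elim: k a => [|k IH] a; first by move=> _; rewrite /= inE.
rewrite fam_S => /allpairsP[[u w] [/= Hu Hw ->]].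
rewrite /=; case: ifP => _; first by rewrite inE.
apply: imset2_f; first exact: IH.
by rewrite RM0 !inE; move: Hw; rewrite !inE.
Qed.

Local Open Scope ring_scope.

Lemma sum_diag (xs : seq nat) x (c : int) : uniq xs -> x \in xs ->
  \sum_(y <- xs) (if x == y then c else 0) = c.
Proof.
elim: xs => [|z xs IH] //= /andP[Hz Hu]; rewrite inE big_cons.
case: (eqVneq x z) => [->|Hne] /= Hx.
  rewrite big1_seq ?addr0 // => y /andP[_ Hy].
  by case: eqP => // E; move: Hz; rewrite E Hy.
by rewrite add0r IH.
Qed.

Definition Zs (xs : seq nat) (g : nat -> bool) n (a : vec n) : int :=
  \sum_(x <- xs) sg (g x) * sg (get a x).

Lemma Zs_sq k xs g : uniq xs -> (forall x, x \in xs -> (x < 2 ^ k)%N) ->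
  \sum_(a <- fam k) Zs xs g a ^+ 2 = (size (fam k) * size xs)%N%:Z.
Proof.
move=> Hu Hb.
under eq_bigr => a _.
  rewrite expr2 /Zs mulr_suml.
  under eq_bigr => x _ do rewrite mulr_sumr.
  over.
rewrite exchange_big /=.
under eq_bigr => x Hx.
  rewrite exchange_big /=.
  under eq_bigr => y Hy.
    under eq_bigr => a _ do
      rewrite mulrACA.
    rewrite -mulr_sumr.
    over.
  over.
rewrite /=.
transitivity (\sum_(x <- xs) (size (fam k))%:Z).
  rewrite big_seq_cond [RHS]big_seq_cond; apply: eq_bigr => x /andP[Hx _].
  rewrite big_seq_cond.
  under eq_bigr => y /andP[Hy _] do rewrite fam_pair ?Hb //.
  rewrite -big_seq_cond.
  transitivity (\sum_(y <- xs) (if x == y then (size (fam k))%:Z else 0)).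
    apply: eq_bigr => y _; case: eqP => [->|_]; last by rewrite mulr0.
    by rewrite sg2 mul1r.
  exact: sum_diag.
rewrite big_const_seq count_predT.
elim: (size xs) => [|s IHs]; first by rewrite muln0.
by rewrite /= IHs mulnS PoszD.
Qed.
Local Close Scope ring_scope.

Local Open Scope ring_scope.

Lemma Zs_count xs g n (a : vec n) :
  Zs xs g a = (2 * count (fun x => g x == get a x) xs)%N%:Z - (size xs)%:Z.
Proof.
rewrite /Zs; elim: xs => [|x xs IH]; first by rewrite big_nil.
rewrite big_cons IH /=; case: (g x); case: (get a x) => /=; lia.
Qed.

Lemma Zs_compl xs g n (a a' : vec n) : (forall x, x \in xs -> get a' x = ~~ get a x) ->
  Zs xs g a' = - Zs xs g a.
Proof.
rewrite /Zs; elim: xs => [|x xs IH] H; first by rewrite !big_nil oppr0.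
rewrite !big_cons IH ?H ?inE ?eqxx // => [|y Hy]; last by apply: H; rewrite inE Hy orbT.
rewrite opprD; congr (_ + _); case: (g x); case: (get a x) => /=; lia.
Qed.

Lemma sum_cst (T : Type) (s : seq T) (c : int) : \sum_(x <- s) c = (size s)%:Z * c.
Proof.
elim: s => [|x s IH]; first by rewrite big_nil mul0r.
by rewrite big_cons IH /= -add1n PoszD mulrDl mul1r.
Qed.

Lemma size_fam k : size (fam k) = (2 ^ k.+1)%N.
Proof. by elim: k => [|k IH] //; rewrite fam_S size_allpairs IH /= [in RHS]expnS mulnC. Qed.

Lemma row_lemma k (xs : seq nat) (g : nat -> bool) : uniq xs ->
  (forall x, x \in xs -> (x < 2 ^ k)%N) ->
  exists2 a, a \in RM 1 k &
    ((size xs <= 2 * count (fun x => g x == get a x) xs) &&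
     (size xs <= (2 * count (fun x => g x == get a x) xs - size xs) ^ 2))%N.
Proof.
move=> Hu Hb.
have [a Ha HZ] : exists2 a, a \in fam k & (size xs)%:Z <= Zs xs g a ^+ 2.
  apply/hasP; apply: contraT => /hasPn Hn.
  have := Zs_sq g Hu Hb.
  have : \sum_(a <- fam k) (Zs xs g a ^+ 2 + 1) <= \sum_(a <- fam k) (size xs)%:Z.
    rewrite big_seq_cond [X in _ <= X]big_seq_cond; apply: ler_sum => a /andP[Ha _].
    by have := Hn a Ha; lia.
  rewrite big_split /= !sum_cst => H1 H2.
  move: H1; rewrite H2 => H1.
  have : (0 < size (fam k))%N by rewrite size_fam expn_gt0.
  move: H1; set F := size (fam k); set S := size xs.
  lia.
have [a' Ha' Hc] := fam_compl Ha.
have [Hpos|Hneg] := lerP 0 (Zs xs g a).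
  exists a; first exact: fam_RM.
  move: Hpos HZ; rewrite Zs_count; set A := count _ _; set S := size xs.
  move=> H1 H2; apply/andP; split; first lia.
  have E : (2 * A - S)%N%:Z = (2 * A)%N%:Z - S%:Z by lia.
  rewrite -lez_nat expnS expn1 PoszM E -expr2; exact: H2.
exists a'; first exact: fam_RM.
have Ha'Z : Zs xs g a' = - Zs xs g a by apply: Zs_compl => x /Hb; apply: Hc.
have Hpos : 0 <= Zs xs g a' by rewrite Ha'Z; lia.
have HZ' : (size xs)%:Z <= Zs xs g a' ^+ 2 by rewrite Ha'Z sqrrN.
move: Hpos HZ'; rewrite Zs_count; set A := count _ _; set S := size xs.
move=> H1 H2; apply/andP; split; first lia.
have E : (2 * A - S)%N%:Z = (2 * A)%N%:Z - S%:Z by lia.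
rewrite -lez_nat expnS expn1 PoszM E -expr2; exact: H2.
Qed.
Local Close Scope ring_scope.

Lemma card_count n (P : nat -> bool) : #|[set j : 'I_n | P j]| = count P (iota 0 n).
Proof.
rewrite cardsE -sum1_card.
rewrite (eq_bigl (fun j : 'I_n => P j)) //.
by rewrite -(big_mkord P (fun _ => 1)) /index_iota subn0 sum1_count.
Qed.

Lemma get_ffunP k (f : vec k) (F : nat -> bool) y :
  (forall i : 'I_k, f i = F i) -> get f y = (y < k) && F y.
Proof.
move=> H; case: (ltnP y k) => Hy; last by rewrite get_oob.
by rewrite -[y]/(nat_of_ord (Ordinal Hy)) get_ord H.
Qed.

Definition agrj t n (j : nat) (v c : mat t n) : nat :=
  count (fun x => [forall i : 'I_t, (i < j) ==> (get (v i) x == get (c i) x)]) (iota 0 n).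

Lemma dt_agr t n (v c : mat t n) : dt v c + agrj t v c = n.
Proof.
rewrite /dt /wtt.
have -> : [set j | [exists i, [ffun i0 => vadd (v i0) (c i0)] i j]] =
          [set j : 'I_n | [exists i, ~~ (get (v i) j == get (c i) j)]].
  apply/setP => j; rewrite !inE.
  apply/existsP/existsP => [[i Hi]|[i Hi]]; exists i; move: Hi;
  by rewrite !ffunE !get_ord; case: (v i j); case: (c i j).
rewrite (card_count n (fun x => [exists i, ~~ (get (v i) x == get (c i) x)])) /agrj.
set Q := (fun x => [exists i, ~~ (get (v i) x == get (c i) x)]).
rewrite [X in _ + X](eq_count (a2 := predC Q)); first by rewrite count_predC size_iota.
move=> x /=; rewrite /Q negb_exists; apply/forallP/forallP => H i; have := H i;
by rewrite ltn_ord /= negbK.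
Qed.

Definition vleft t m (v : mat t (2 ^ m.+1)) : mat t (2 ^ m) :=
  [ffun i => [ffun x : 'I_(2 ^ m) => get (v i) x]].
Definition vright t m (v : mat t (2 ^ m.+1)) (c0 : mat t (2 ^ m)) : mat t (2 ^ m) :=
  [ffun i => vadd [ffun x : 'I_(2 ^ m) => get (v i) (x + 2 ^ m)] (c0 i)].
Definition glue t m (c0 w : mat t (2 ^ m)) : mat t (2 ^ m.+1) :=
  [ffun i => concat (2 ^ m.+1) (c0 i) (vadd (c0 i) (w i))].

Lemma glue_in t r m (c0 w : mat t (2 ^ m)) :
  r != 0 -> ~~ (m.+1 <= r) -> c0 \in powC t (RM r m) -> w \in powC t (RM r.-1 m) ->
  glue c0 w \in powC t (RM r m.+1).
Proof.
move=> Hr Hm /[!inE] /forallP H0 /forallP Hw; apply/forallP => i.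
rewrite /= (negbTE Hr) (negbTE Hm) ffunE.
by apply: imset2_f; [apply: H0 | apply: Hw].
Qed.

Lemma glue_agr t m (v : mat t (2 ^ m.+1)) (c0 w : mat t (2 ^ m)) :
  agrj t v (glue c0 w) = agrj t (vleft v) c0 + agrj t (vright v c0) w.
Proof.
have Ei : iota 0 (2 ^ m.+1) = iota 0 (2 ^ m) ++ iota (2 ^ m) (2 ^ m).
  by rewrite expnS mul2n -addnn iotaD.
rewrite /agrj Ei count_cat; congr (_ + _).
  apply: eq_in_count => x; rewrite mem_iota add0n => /andP[_ Hx].
  apply: eq_forallb => i; congr (_ ==> _).
  rewrite /glue /vleft !ffunE get_concat get_ffun Hx.
  have -> // : x < 2 ^ m.+1 by rewrite expnS mul2n -addnn ltn_addr.
have Ei2 : iota (2 ^ m) (2 ^ m) = map (addn (2 ^ m)) (iota 0 (2 ^ m)).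
  by rewrite -iotaDl addn0.
rewrite Ei2 count_map.
apply: eq_in_count => x; rewrite mem_iota add0n => /andP[_ Hx].
apply: eq_forallb => i; congr (_ ==> _); rewrite /glue /vright !ffunE /=.
rewrite get_concat get_vadd.
have -> : 2 ^ m + x < 2 ^ m.+1 by rewrite expnS mul2n -addnn ltn_add2l.
rewrite ltnNge leq_addr /= addKn !get_vadd.
rewrite [get [ffun _ => _] x](get_ffunP (F := fun y => get (v i) (y + 2 ^ m))); last first.
  by move=> j; rewrite ffunE.
rewrite Hx /= addnC.
by case: (get (v i) _); case: (get (c0 i) x); case: (get (w i) x).
Qed.

Lemma base_step t k (v c : mat t (2 ^ k)) j : j < t -> c \in powC t (RM 1 k) ->
  exists2 c', c' \in powC t (RM 1 k) &
    (agrj j v c <= 2 * agrj j.+1 v c') &&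
    (agrj j v c <= (2 * agrj j.+1 v c' - agrj j v c) ^ 2).
Proof.
move=> Hj /[!inE] /forallP Hc.
set P := (fun x => [forall i : 'I_t, (i < j) ==> (get (v i) x == get (c i) x)]).
set xs := filter P (iota 0 (2 ^ k)).
have Hu : uniq xs by rewrite filter_uniq // iota_uniq.
have Hb : forall x, x \in xs -> x < 2 ^ k.
  by move=> x; rewrite mem_filter mem_iota add0n => /andP[_ /andP[]].
set j' := Ordinal Hj.
have [a Ha Hineq] := row_lemma (get (v j')) Hu Hb.
exists [ffun i => if val i == j then a else c i].
  by rewrite inE; apply/forallP => i; rewrite ffunE; case: eqP => _; [exact: Ha | exact: Hc].
have E1 : agrj j v c = size xs by rewrite size_filter.
have E2 : agrj j.+1 v [ffun i => if val i == j then a else c i] =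
          count (fun x => get (v j') x == get a x) xs.
  rewrite /agrj count_filter; apply: eq_count => x /=.
  apply/forallP/andP => [H|[H1 /forallP H2] i].
    split; first by have := H j'; rewrite /= ltnSn ffunE eqxx.
    apply/forallP => i; apply/implyP => Hi; have := H i.
    by rewrite ffunE (ltn_eqF Hi) ltnS (ltnW Hi).
  apply/implyP; rewrite ffunE ltnS leq_eqVlt => /orP[/eqP Ei|Hi].
    by rewrite Ei eqxx; have -> : i = j' by apply: val_inj.
  by rewrite (ltn_eqF Hi); have := H2 i; rewrite Hi.
by rewrite E1 E2.
Qed.

Lemma binom_ratio m r j : j <= r -> r <= m ->
  'C(m - j, r - j) * m ^ j <= 'C(m, r) * r ^ j.
Proof.
move=> Hj Hr; elim: j Hj => [|j IH] Hj; first by rewrite !subn0 !expn0 !muln1.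
have IH' := IH (ltnW Hj).
have Id := mul_bin_diag (m - j) (r - j.+1).
have E1 : (m - j).-1 = m - j.+1 by lia.
have E2 : (r - j.+1).+1 = r - j by lia.
rewrite E1 E2 in Id.
set A := 'C(m - j.+1, r - j.+1) in Id *.
set B := 'C(m - j, r - j) in Id IH'.
set C := 'C(m, r) in IH' *.
have HAm : A * m <= B * r.
  have H1 : (m - j) * (A * m) <= (m - j) * (B * r).
    rewrite mulnA Id.
    have : (r - j) * m <= r * (m - j) by nia.
    nia.
  rewrite leq_mul2l in H1; case/orP: H1 => // /eqP H0; lia.
rewrite expnS expnS.
have : A * (m * m ^ j) = (A * m) * m ^ j by rewrite mulnA.
move=> ->.
apply: (leq_trans (leq_mul HAm (leqnn _))).
rewrite -mulnA [r * _]mulnC mulnA.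
have -> : C * (r * r ^ j) = (C * r ^ j) * r by rewrite [r * _]mulnC mulnA.
by rewrite leq_mul2r IH' orbT.
Qed.

From Stdlib Require Import Reals Lra Lia.

Lemma bigmin_le (T : finType) (A : pred T) (F : T -> nat) n x :
  x \in A -> (\big[minn/n]_(y in A) F y <= F x)%nat.
Proof.
move=> Hx; have : x \in index_enum T by rewrite mem_index_enum.
elim: (index_enum T) => [|y s IH] //; rewrite inE big_cons => /orP[/eqP<-|Hs].
  by rewrite Hx geq_minl.
case: (y \in A); last exact: IH.
by apply: leq_trans (geq_minr _ _) (IH Hs).
Qed.

Open Scope R_scope.

Definition Good t r m (X : R) := forall v : mat t (expn 2 m),
  exists2 c, c \in powC t (RM r m) & X <= INR (agrj t v c).

Lemma Good_mono t r m X Y : X <= Y -> Good t r m Y -> Good t r m X.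
Proof. move=> H G v; have [c Hc HY] := G v; exists c => //; lra. Qed.

Lemma RM_full r m : (1 <= r)%nat -> (m <= r)%nat -> RM r m = setT.
Proof.
case: r => // r _; case: m => [|m] //= H.
by rewrite H.
Qed.

Lemma agr_self t n (v : mat t n) : agrj t v v = n.
Proof.
rewrite /agrj (eq_count (a2 := predT)) ?count_predT ?size_iota // => x.
by apply/forallP => i; rewrite eqxx implybT.
Qed.

Lemma INR_addn a b : INR (addn a b) = INR a + INR b.
Proof. by rewrite -plus_INR. Qed.
Lemma INR_muln a b : INR (muln a b) = INR a * INR b.
Proof. by rewrite -mult_INR. Qed.
Lemma INR_expn a b : INR (expn a b) = INR a ^ b.
Proof. elim: b => [|b IH] //; by rewrite expnS INR_muln IH. Qed.
Lemma INR_2pow m : INR (expn 2 m) = 2 ^ m.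
Proof. by rewrite INR_expn. Qed.

Lemma Good_full t r m : (1 <= r)%nat -> (m <= r)%nat -> Good t r m (2 ^ m).
Proof.
move=> H1 H2 v; exists v; last by rewrite agr_self INR_2pow; lra.
by rewrite inE RM_full //; apply/forallP => i; rewrite inE.
Qed.

Lemma Good_rec t r m X Y : r != 0%nat -> ~~ (m.+1 <= r)%nat ->
  Good t r m X -> Good t r.-1 m Y -> Good t r m.+1 (X + Y).
Proof.
move=> Hr Hm GX GY v.
have [c0 Hc0 HX] := GX (vleft v).
have [w Hw HY] := GY (vright v c0).
exists (glue c0 w); first exact: glue_in.
by rewrite glue_agr plus_INR; lra.
Qed.

Definition s := sqrt 2.
Lemma s_pos : 0 < s.
Proof. apply: sqrt_lt_R0; lra. Qed.
Lemma s2 : s * s = 2.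
Proof. apply: sqrt_sqrt; lra. Qed.
Lemma spow k : s ^ k * s ^ k = 2 ^ k.
Proof. by rewrite -Rpow_mult_distr s2. Qed.
Lemma spow_pos k : 0 < s ^ k.
Proof. apply: pow_lt; exact: s_pos. Qed.

Definition e j := match j with 0%nat => 0 | S j' => s ^ j' end.
Lemma e_ge0 j : 0 <= e j.
Proof. case: j => [|j] /=; [lra | apply: Rlt_le; exact: spow_pos]. Qed.

Lemma INR_subn a b : (b <= a)%nat -> INR (subn a b) = INR a - INR b.
Proof. move=> H; rewrite -{2}(subnK H) INR_addn; lra. Qed.

Lemma agr0 t n (v c : mat t n) : agrj 0 v c = n.
Proof.
rewrite /agrj (eq_count (a2 := predT)) ?count_predT ?size_iota // => x.
by apply/forallP => i.
Qed.

Lemma real_step N N' j k :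
  0 <= N -> 2 ^ k + e j * s ^ k <= N * 2 ^ j -> N <= 2 * N' -> N <= (2 * N' - N) ^ 2 ->
  2 ^ k + e (S j) * s ^ k <= N' * 2 ^ (S j).
Proof.
move=> HN0 H1 H2 H3 /=.
have Hp := spow k; have Hb := spow j; have Pp := spow_pos k; have Pb := spow_pos j.
have He := e_ge0 j.
set p := s ^ k in H1 Hp Pp *; set b := s ^ j in Hb Pb *.
rewrite -Hp -Hb in H1 *.
set D := 2 * N' - N in H3.
have HD : 0 <= D by rewrite /D; lra.
have Hep : 0 <= e j * p by apply: Rmult_le_pos; lra.
have HNb : p * p <= N * (b * b) by lra.
have HDb : p <= D * b.
  apply: Rnot_lt_le => Hlt.
  have : (D * b) * (D * b) < p * p.
    apply: Rmult_le_0_lt_compat => //; apply: Rmult_le_pos; lra.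
  have : N * (b * b) <= (D * D) * (b * b).
    apply: Rmult_le_compat_r; first nra.
    by rewrite /= Rmult_1_r in H3.
  nra.
have -> : N' = (N + D) / 2 by rewrite /D; field.
have : b * p <= D * b * b by nra.
nra.
Qed.

Lemma base_iter t k (v : mat t (expn 2 k)) j : (j <= t)%nat ->
  exists2 c, c \in powC t (RM 1 k) & 2 ^ k + e j * s ^ k <= INR (agrj j v c) * 2 ^ j.
Proof.
elim: j => [|j IH] Hj.
  pose a0 := nth [ffun=> false] (fam k) 0.
  have Ha0 : a0 \in RM 1 k by apply: fam_RM; apply: mem_nth; rewrite size_fam expn_gt0.
  exists [ffun=> a0].
    by rewrite inE; apply/forallP => i; rewrite ffunE.
  by rewrite agr0 INR_2pow /=; lra.
have Hjt : (j < t)%nat by [].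
have [c Hc Hr] := IH (ltnW Hjt).
have [c' Hc' /andP[H1 H2]] := base_step v Hjt Hc.
exists c' => //.
have I2 : INR 2 = 2 by rewrite /=; lra.
apply: (real_step (N := INR (agrj j v c))).
- exact: pos_INR.
- exact: Hr.
- by move/leP: H1 => /le_INR; rewrite INR_muln I2.
- by move/leP: H2 => /le_INR; rewrite INR_expn INR_subn // INR_muln I2.
Qed.

Lemma Good_base t k : Good t 1 k ((2 ^ k + e t * s ^ k) / 2 ^ t).
Proof.
move=> v; have [c Hc H] := base_iter v (leqnn t).
exists c => //.
have Ht : 0 < 2 ^ t by apply: pow_lt; lra.
apply/(Rmult_le_reg_r (2 ^ t)) => //; rewrite /Rdiv Rmult_assoc Rinv_l; lra.
Qed.

Lemma e_bound t : sqrt (2 ^ t - 1) <= e t * s.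
Proof.
case: t => [|t] /=.
  rewrite Rminus_eq_0 sqrt_0; lra.
have E1 : s ^ t * s = s ^ t.+1 by rewrite /= Rmult_comm.
have E2 : sqrt (2 ^ t.+1) = s ^ t.+1.
  by rewrite -(spow t.+1) sqrt_square //; apply: Rlt_le; exact: spow_pos.
rewrite E1 -E2; apply: sqrt_le_1_alt; rewrite /=; lra.
Qed.

Definition w := 2 + s.
Definition P r m := (1 + s) ^ (r.-1) * s ^ m / s.
Fixpoint ES (n : nat) (f : nat -> R) : R :=
  match n with 0%nat => 0 | S n' => ES n' f + f n' end.
Definition term r m j :=
  if (2 <= j)%nat && (j <= r)%nat then INR (binomial.binomial (subn m j) (subn r j)) * w ^ (j.-1) else 0.
Definition E r m := ES r.+1 (term r m).
Definition beta t := sqrt (2 ^ t - 1) / 2 ^ t.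

Lemma ES_le3 n f g h : (forall j, (j < n)%nat -> g j + h j <= f j) -> ES n g + ES n h <= ES n f.
Proof.
elim: n => [|n IH] H /=; first lra.
have := IH (fun j Hj => H j (ltnW Hj)); have := H n (ltnSn n); lra.
Qed.

Lemma ES_bound n f M : (forall j, (j < n)%nat -> f j <= M) -> ES n f <= INR n * M.
Proof.
elim: n => [|n IH] H; first by rewrite /=; lra.
rewrite [ES n.+1 f]/=.
have := IH (fun j Hj => H j (ltnW Hj)); have := H n (ltnSn n).
have -> : INR n.+1 = INR n + 1 by rewrite -addn1 INR_addn.
lra.
Qed.

Lemma ES_ge_term n f j : (j < n)%nat -> (forall i, 0 <= f i) -> f j <= ES n f.
Proof.
move=> Hj Hf; elim: n Hj => [|n IH] // Hj /=.
have H0 : forall k, 0 <= ES k f.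
  by elim=> [|k IHk] /=; [lra | have := Hf k; lra].
case: (ltnP j n) => Hjn; first by have := IH Hjn; have := Hf n; lra.
have -> : j = n by apply/eqP; rewrite eqn_leq Hjn -ltnS Hj.
have := H0 n; lra.
Qed.

Lemma w_pos : 0 < w.
Proof. rewrite /w; have := s_pos; lra. Qed.

Lemma term_ge0 r m j : 0 <= term r m j.
Proof.
rewrite /term; case: ifP => _; last lra.
apply: Rmult_le_pos; [exact: pos_INR | apply: pow_le; have := w_pos; lra].
Qed.

Lemma beta_ge0 t : 0 <= beta t.
Proof.
rewrite /beta /Rdiv; apply: Rmult_le_pos; first exact: sqrt_pos.
apply: Rlt_le; apply: Rinv_0_lt_compat; apply: pow_lt; lra.
Qed.

Lemma P_add r m : (2 <= r)%nat -> P r m + P r.-1 m = P r m.+1.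
Proof.
case: r => [|[|r]] // _; rewrite /P /=.
have Hs := s_pos; have H2 := s2.
set X := (1 + s) ^ r * s ^ m / s.
have -> : (1 + s) * (1 + s) ^ r * s ^ m / s = (1 + s) * X by rewrite /X; field; lra.
have -> : (1 + s) * (1 + s) ^ r * (s * s ^ m) / s = (1 + s) * s * X by rewrite /X; field; lra.
have -> : (1 + s) * s = (1 + s) + 1 by nra.
rewrite /X; ring.
Qed.

Lemma P_diag r : (1 <= r)%nat -> P r r = w ^ r.-1.
Proof.
case: r => [|r] // _; rewrite /P /w /=; have Hs := s_pos.
have -> : 2 + s = (1 + s) * s by have := s2; nra.
rewrite Rpow_mult_distr; field; lra.
Qed.

Lemma E_one m : E 1 m = 0.
Proof. rewrite /E /= /term /=; lra. Qed.

Lemma E_diag r : (2 <= r)%nat -> w ^ r.-1 <= E r r.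
Proof.
move=> Hr; rewrite /E.
have := ES_ge_term (ltnSn r) (term_ge0 r r).
by rewrite /term Hr leqnn subnn bin0 /= Rmult_1_l.
Qed.

Lemma E_super r m : (2 <= r)%nat -> (r <= m)%nat -> E r m + E r.-1 m <= E r m.+1.
Proof.
move=> H2 Hrm; rewrite /E.
have -> : ES r.-1.+1 (term r.-1 m) = ES r.+1 (term r.-1 m).
  rewrite prednK ?(leq_trans _ H2) //= /term.
  case: ifP => [/andP[_ H]|_]; last lra.
  by move: H; lia.
apply: ES_le3 => j Hj; rewrite /term.
case: (leqP 2 j) => H2j /=; last lra.
rewrite ltnS in Hj.
case: (ltnP j r) => Hjr.
  have Hj1 : (j <= r.-1)%nat by rewrite -ltnS prednK // (leq_trans _ H2).
  rewrite Hj1 (ltnW Hjr).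
  have -> : subn m.+1 j = (subn m j).+1 by rewrite subSn // (leq_trans (ltnW Hjr) Hrm).
  have -> : subn r j = (subn r.-1 j).+1 by rewrite -subSn // prednK // (leq_trans _ H2).
  rewrite binS INR_addn; lra.
have Ejr : j = r by apply/eqP; rewrite eqn_leq Hj Hjr.
rewrite Ejr leqnn.
have -> : (r <= r.-1)%nat = false by apply/negbTE; lia.
by rewrite !subnn !bin0; lra.
Qed.

Lemma main_good t m r : (1 <= r)%nat -> (r <= m)%nat ->
  Good t r m (2 ^ m / 2 ^ t + beta t * (P r m - E r m)).
Proof.
have Ht : 0 < 2 ^ t by apply: pow_lt; lra.
have Ht1 : 1 <= 2 ^ t by apply: pow_R1_Rle; lra.
have Hb := beta_ge0 t.
elim: m r => [|m IH] r H1 Hrm; first by move: H1 Hrm; lia.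
case: (eqVneq r 1%nat) => [->|Hr1].
  apply: (Good_mono _ (@Good_base t m.+1)).
  rewrite E_one /P /= Rmult_1_l Rminus_0_r /beta.
  have Hs := s_pos; have Hsk := spow_pos m.+1.
  have He := e_bound t.
  have : sqrt (2 ^ t - 1) * (s ^ m.+1 / s) <= e t * s ^ m.+1.
    apply: (Rmult_le_reg_r s) => //.
    have -> : sqrt (2 ^ t - 1) * (s ^ m.+1 / s) * s = sqrt (2 ^ t - 1) * s ^ m.+1 by field; lra.
    have -> : e t * s ^ m.+1 * s = (e t * s) * s ^ m.+1 by ring.
    apply: Rmult_le_compat_r; lra.
  move=> H.
  have -> : (2 ^ m.+1 + e t * s ^ m.+1) / 2 ^ t = 2 ^ m.+1 / 2 ^ t + (e t * s ^ m.+1) / 2 ^ t by field; lra.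
  have -> : sqrt (2 ^ t - 1) / 2 ^ t * (s * s ^ m / s) = (sqrt (2 ^ t - 1) * (s ^ m.+1 / s)) / 2 ^ t.
    by rewrite /=; field; lra.
  apply: Rplus_le_compat_l; apply: Rmult_le_compat_r => //.
  by apply: Rlt_le; apply: Rinv_0_lt_compat.
case: (eqVneq r m.+1) => [Er|Hrm1].
  rewrite Er; apply: (Good_mono _ (@Good_full t m.+1 m.+1 (ltn0Sn m) (leqnn _))).
  have HP := P_diag (leq0n m : (1 <= m.+1)%nat).
  have HE := @E_diag m.+1 (ltac:(move: H1 Hr1; rewrite Er; lia)).
  have : beta t * (P m.+1 m.+1 - E m.+1 m.+1) <= 0.
    rewrite -(Rmult_0_r (beta t)); apply: Rmult_le_compat_l => //; lra.
  have : 2 ^ m.+1 / 2 ^ t <= 2 ^ m.+1.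
    apply: (Rmult_le_reg_r (2 ^ t)) => //.
    have -> : 2 ^ m.+1 / 2 ^ t * 2 ^ t = 2 ^ m.+1 by field; lra.
    have := pow_lt 2 m.+1 ltac:(lra); nra.
  lra.
have H2 : (2 <= r)%nat by move: H1 Hr1; lia.
have Hrm' : (r <= m)%nat by move: Hrm Hrm1; lia.
have G1 := IH r H1 Hrm'.
have G2 := IH r.-1 (ltac:(lia)) (ltac:(lia)).
have G := Good_rec (ltac:(lia) : r != 0%nat) (ltac:(lia) : ~~ (m.+1 <= r)%nat) G1 G2.
apply: (Good_mono _ G).
have HP := P_add m H2.
have HE := E_super H2 Hrm'.
have -> : 2 ^ m.+1 / 2 ^ t = 2 ^ m / 2 ^ t + 2 ^ m / 2 ^ t by rewrite /=; field; lra.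
rewrite -HP.
have : beta t * (E r m + E r.-1 m) <= beta t * E r m.+1 by apply: Rmult_le_compat_l.
nra.
Qed.


Lemma E_bound r m : (1 <= r)%nat -> w * INR r <= INR m ->
  E r m <= INR r.+1 * (INR (binomial.binomial m r) / w).
Proof.
move=> H1 Hw.
have Hwp := w_pos.
have Hrm : (r <= m)%nat.
  apply/leP; apply: INR_le.
  have : 1 <= w by rewrite /w; have := sqrt_pos 2; fold s; lra.
  have := pos_INR r; nra.
apply: ES_bound => j Hj; rewrite /term.
case: ifP => [/andP[H2j Hjr]|_].
  2: apply: Rmult_le_pos; [exact: pos_INR | apply: Rlt_le; exact: Rinv_0_lt_compat].
have HB := binom_ratio Hjr Hrm.
move/leP/le_INR: HB; rewrite !INR_muln !INR_expn => HB.
set Cj := INR (binomial.binomial (subn m j) (subn r j)) in HB *.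
set C := INR (binomial.binomial m r) in HB *.
have Hr0 : 0 < INR r by apply: lt_0_INR; apply/ltP.
have Hrj : 0 < INR r ^ j by apply: pow_lt.
have HCj : 0 <= Cj by apply: pos_INR.
have Hwr : (w * INR r) ^ j <= INR m ^ j.
  apply: pow_incr; split => //; apply: Rmult_le_pos; lra.
rewrite Rpow_mult_distr in Hwr.
have Key : Cj * w ^ j <= C.
  apply: (Rmult_le_reg_r (INR r ^ j)) => //.
  rewrite Rmult_assoc; apply: Rle_trans (Rmult_le_compat_l _ _ _ HCj Hwr) HB.
have Ewj : forall k, (0 < k)%nat -> w ^ k = w ^ k.-1 * w.
  by case=> [|k] //= _; rewrite Rmult_comm.
rewrite (Ewj j (ltnW H2j)) in Key.
apply: (Rmult_le_reg_r w) => //.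
have -> : C / w * w = C by field; lra.
lra.
Qed.

Lemma Rpower_half m : Rpower 2 ((INR m - 1) / 2) = s ^ m / s.
Proof.
have Hs := s_pos.
have -> : (INR m - 1) / 2 = / 2 * INR m + - (/ 2) by field.
rewrite Rpower_plus Rpower_Ropp -Rpower_mult Rpower_sqrt; last lra.
by rewrite Rpower_pow.
Qed.

Delimit Scope nat_scope with N.
Delimit Scope R_scope with R.
Theorem lemma20 (m t r : nat) :
  (3 <= m)%N -> (2 <= r)%N -> (INR r <= INR m / (2 + sqrt 2))%R ->
  (INR (Rtrm t r m) <=
     (1 - 1 / 2 ^ t) * 2 ^ m
     - sqrt (2 ^ t - 1) / 2 ^ t * (1 + sqrt 2) ^ (r - 1)
       * Rpower 2 ((INR m - 1) / 2)
     + sqrt (2 ^ t - 1) / (2 ^ t * sqrt (sqrt 2)) * INR r * INR 'C(m, r))%R.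
Proof.
move=> Hm Hr Hreg.
have Hs := s_pos; have Hs2 := s2; have Hwp := w_pos.
have Hw : w * INR r <= INR m.
  rewrite /w /s; apply: (Rmult_le_reg_r (/ (2 + sqrt 2))).
    by apply: Rinv_0_lt_compat; fold s; lra.
  rewrite Rmult_comm -Rmult_assoc Rinv_l; first by rewrite Rmult_1_l.
  fold s; lra.
have Hrm : (r <= m)%nat.
  apply/leP; apply: INR_le.
  have : 1 <= w by rewrite /w; lra.
  have := pos_INR r; nra.
have H1 : (1 <= r)%nat by lia.
have G := @main_good t m r H1 Hrm.
rewrite /Rtrm /Rt.
have Hcard : (0 < #|{: mat t (expn 2 m)}|)%nat.
  by apply/card_gt0P; exists [ffun=> [ffun=> false]].
have [v0 Hv0] := eq_bigmax (fun v : mat t (expn 2 m) =>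
   \big[minn/expn 2 m]_(c in powC t (RM r m)) dt v c) Hcard.
rewrite Hv0.
have [c Hc HX] := G v0.
have Hle := @bigmin_le _ (mem (powC t (RM r m))) (dt v0) (expn 2 m) c Hc.
have Hdt := dt_agr v0 c.
have HE := E_bound H1 Hw.
move/leP/le_INR: Hle => Hle.
apply: (Rle_trans _ _ _ Hle).
have -> : INR (dt v0 c) = 2 ^ m - INR (agrj t v0 c).
  have := f_equal INR Hdt; rewrite INR_addn INR_2pow; lra.
rewrite Rpower_half subn1.
fold s.
have Ht : 0 < 2 ^ t by apply: pow_lt; lra.
have Hb := beta_ge0 t.
set C := INR 'C(m, r) in HE *.
have HC : 0 <= C by apply: pos_INR.
have Hq : sqrt s <= 3 / 2.
  have Hq0 := sqrt_pos s; have Hqq := sqrt_sqrt s (Rlt_le _ _ Hs).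
  have Hs15 : s <= 3 / 2 by nra.
  nra.
have Hq0 : 0 < sqrt s by apply: sqrt_lt_R0.
have HEr : E r m <= INR r * C / sqrt s.
  apply: (Rle_trans _ _ _ HE).
  have Hr1 : INR r.+1 = INR r + 1 by rewrite -addn1 INR_addn.
  rewrite Hr1.
  have Hr1' : 1 <= INR r by apply: (le_INR 1); apply/leP.
  apply: (Rmult_le_reg_r (w * sqrt s)); first nra.
  have -> : (INR r + 1) * (C / w) * (w * sqrt s) = (INR r + 1) * C * sqrt s by field; lra.
  have -> : INR r * C / sqrt s * (w * sqrt s) = INR r * C * w by field; lra.
  have Hw3 : 3 <= w by rewrite /w; nra.
  have Hk : (INR r + 1) * sqrt s <= INR r * w by nra.
  have -> : (INR r + 1) * C * sqrt s = ((INR r + 1) * sqrt s) * C by ring.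
  have -> : INR r * C * w = (INR r * w) * C by ring.
  by apply: Rmult_le_compat_r.
have Target :
  sqrt (2 ^ t - 1) / 2 ^ t * (1 + s) ^ r.-1 * (s ^ m / s) = beta t * P r m.
  by rewrite /beta /P; field; lra.
have Target2 :
  sqrt (2 ^ t - 1) / (2 ^ t * sqrt s) * INR r * C = beta t * (INR r * C / sqrt s).
  by rewrite /beta; field; lra.
rewrite Target Target2.
have : beta t * E r m <= beta t * (INR r * C / sqrt s) by apply: Rmult_le_compat_l.
have -> : (1 - 1 / 2 ^ t) * 2 ^ m = 2 ^ m - 2 ^ m / 2 ^ t by field; lra.
move: HX; lra.
Qed.
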